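(* Let $\mathbb{K}$ be a field and $\alpha_1,\dots,\alpha_n\in\mathbb{K}^*$. If $n$ is even, then $X_{\mathbb{A}_n}(\alpha_1,\dots,\alpha_n)\simeq X_{\mathbb{A}_n}(1,1,\dots,1)$. If $n$ is odd, then $X_{\mathbb{A}_n}(\alpha_1,\dots,\alpha_n)\simeq X_{\mathbb{A}_n}(\alpha,1,\dots,1)$ for some $\alpha\in\mathbb{K}^*$ depending only on the $\alpha_i$ with $i$ odd.
   Context: $X_{\mathbb{A}_n}(\alpha_1,\dots,\alpha_n)$ is the affine variety over $\mathbb{K}$ in the variables $x_1,\dots,x_n,x'_1,\dots,x'_n$ defined by $x_1x'_1=1+\alpha_1x_2$, $x_ix'_i=1+\alpha_i x_{i-1}x_{i+1}$ for $2\le i\le n-1$, and $x_nx'_n=1+\alpha_nx_{n-1}$ (for $n=1$: $x_1x'_1=1+\alpha_1$). *)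

(* Defs.v *)
From HB Require Import structures.
From mathcomp Require Import all_boot all_order all_algebra.
From mathcomp Require Import mpoly.
Set Implicit Arguments. Unset Strict Implicit. Unset Printing Implicit Defensive.
Import Order.TTheory GRing.Theory Num.Theory.
Local Open Scope ring_scope.

(* Polynomial ring K[x_1..x_n, x'_1..x'_n] = {mpoly K[n + n]}:
   x_i is variable (lshift n i), x'_i is variable (rshift n i) (0-based i). *)
Definition xv (K : fieldType) (n : nat) (i : 'I_n) : {mpoly K[n + n]} :=
  'X_(lshift n i).
Definition xpv (K : fieldType) (n : nat) (i : 'I_n) : {mpoly K[n + n]} :=
  'X_(rshift n i).

Definition An_gen (K : fieldType) (n : nat) (alpha : 'I_n -> K) (i : 'I_n)
  : {mpoly K[n + n]} :=
  xv K i * xpv K i - 1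
  - (alpha i)%:MP * \prod_(j < n | ((j == i.+1 :> nat) || (i == j.+1 :> nat))) xv K j.

Definition in_ideal (K : fieldType) (m k : nat) (gs : 'I_k -> {mpoly K[m]})
  (p : {mpoly K[m]}) : Prop :=
  exists c : 'I_k -> {mpoly K[m]}, p = \sum_(i < k) c i * gs i.

(* X_{A_n}(alpha) ~= X_{A_n}(beta) as affine K-varieties (K-schemes), i.e. their
   coordinate rings K[x,x']/I are isomorphic as K-algebras. Written out:
   polynomial maps F (inducing K[X]/I_alpha -> K[X]/I_beta, X_k |-> F_k) and
   G (inducing K[X]/I_beta -> K[X]/I_alpha, X_k |-> G_k) which are well defined
   and mutually inverse. *)
Definition An_iso (K : fieldType) (n : nat) (alpha beta : 'I_n -> K) : Prop :=
  exists F G : (n + n).-tuple {mpoly K[n + n]},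
    [/\ (forall i, in_ideal (An_gen beta) (comp_mpoly F (An_gen alpha i))),
        (forall i, in_ideal (An_gen alpha) (comp_mpoly G (An_gen beta i))),
        (forall k, in_ideal (An_gen alpha) (comp_mpoly G (tnth F k) - 'X_k))
      & (forall k, in_ideal (An_gen beta) (comp_mpoly F (tnth G k) - 'X_k))].

(* Main.v *)
Require Import Defs.
From HB Require Import structures.
From mathcomp Require Import all_boot all_order all_algebra.
From mathcomp Require Import mpoly.
From mathcomp Require Import zify ring.
Import Order.TTheory GRing.Theory Num.Theory.
Local Open Scope ring_scope.

Section Comb.
Variable K : fieldType.

Lemma prod_nb (f : nat -> K) (i m : nat) :
  \prod_(j < m | (j == i.+1 :> nat) || (i == j.+1 :> nat)) f j =
  (if (0 < i)%N && (i.-1 < m)%N then f i.-1 else 1) *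
  (if (i.+1 < m)%N then f i.+1 else 1).
Proof.
elim: m => [|m IH]; first by rewrite big_ord0 !andbF /= mulr1.
rewrite big_mkcond big_ord_recr /= -big_mkcond /= IH.
repeat (case: ifP => /= ?); rewrite ?mulr1 ?mul1r; try (exfalso; lia).
all: try done; try (congr (_ * _)); try (congr f; lia).
Qed.

Fixpoint rec (a : nat -> K) (j : nat) : K :=
  match j with 0 | 1 => 1 | (j'.+2)%N => a j' / rec a j' end.

Lemma rec_nz a (nz : forall k, a k != 0) j : rec a j != 0.
Proof.
elim: j {-2}j (leqnn j) => [|j IH] [|[|k]] //= hk; rewrite ?oner_eq0 //.
by rewrite mulf_neq0 ?invr_eq0 // IH //; lia.
Qed.

Lemma rec_eq a a' j : (forall k, odd k = odd j -> a k = a' k) -> rec a j = rec a' j.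
Proof.
elim: j {-2}j (leqnn j) => [|j IH] [|[|k]] //= hk H.
rewrite H ?IH //=; first (by lia); last by rewrite negbK.
by move=> k' hk'; apply: H; rewrite /= negbK.
Qed.

End Comb.
Arguments rec {K}.
Arguments rec_nz {K}.
Arguments rec_eq {K}.
Arguments prod_nb {K}.
Section Scale.
Variables (K : fieldType) (n : nat).

Definition sc (d : 'I_n -> K) (k : 'I_(n + n)) : K :=
  match split k with inl i => d i | inr i => (d i)^-1 end.

Definition Tsc (d : 'I_n -> K) : (n + n).-tuple {mpoly K[n + n]} :=
  [tuple (sc d k)%:MP * 'X_k | k < n + n].

Lemma sc_l (d : 'I_n -> K) i : sc d (lshift n i) = d i.
Proof. by rewrite /sc -[lshift n i]/(unsplit (inl i)) unsplitK. Qed.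
Lemma sc_r (d : 'I_n -> K) i : sc d (rshift n i) = (d i)^-1.
Proof. by rewrite /sc -[rshift n i]/(unsplit (inr i)) unsplitK. Qed.

Lemma compT_X (d : 'I_n -> K) k : comp_mpoly (Tsc d) 'X_k = (sc d k)%:MP * 'X_k.
Proof. by rewrite comp_mpolyXU -tnth_nth tnth_mktuple. Qed.

Definition nb (i j : 'I_n) : bool := (j == i.+1 :> nat) || (i == j.+1 :> nat).

Lemma compT_gen (d : 'I_n -> K) (nz : forall i, d i != 0) (alpha beta : 'I_n -> K)
  (H : forall i, beta i = alpha i * \prod_(j < n | nb i j) d j) i :
  comp_mpoly (Tsc d) (An_gen alpha i) = An_gen beta i.
Proof.
rewrite /An_gen /xv /xpv !rmorphB /= rmorph1 !rmorphM /= comp_mpolyC rmorph_prod /=.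
rewrite !compT_X sc_l sc_r.
under eq_bigr => j _ do rewrite compT_X sc_l.
have hC : (d i)%:MP * (d i)^-1%:MP = 1 :> {mpoly K[n + n]}.
  by rewrite -mpolyCM; rewrite (_ : d i * _ = 1) ?mpolyC1 //; apply: mulfV.
rewrite big_split /= -rmorph_prod H mpolyCM.
rewrite mulrACA hC mul1r mulrA.
by rewrite /nb.
Qed.

Lemma compTT (d : 'I_n -> K) (nz : forall i, d i != 0) k :
  comp_mpoly (Tsc (fun i => (d i)^-1)) (tnth (Tsc d) k) = 'X_k.
Proof.
rewrite tnth_mktuple rmorphM /= comp_mpolyC compT_X mulrA -mpolyCM.
rewrite /sc; case: (split k) => i; by rewrite ?invrK ?mulfV ?mulVf ?mpolyC1 ?mul1r.
Qed.

Lemma in_ideal_gen m k (gs : 'I_k -> {mpoly K[m]}) i : in_ideal gs (gs i).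
Proof.
exists (fun j => (j == i)%:R); rewrite (bigD1 i) //= eqxx mul1r big1 ?addr0 //.
by move=> j /negbTE ->; rewrite mul0r.
Qed.

Lemma in_ideal0 m k (gs : 'I_k -> {mpoly K[m]}) : in_ideal gs 0.
Proof. by exists (fun _ => 0); rewrite big1 // => j _; rewrite mul0r. Qed.


Lemma scale_iso (d : 'I_n -> K) (nz : forall i, d i != 0) (alpha beta : 'I_n -> K)
  (H : forall i, beta i = alpha i * \prod_(j < n | nb i j) d j) :
  An_iso alpha beta.
Proof.
have nz' : forall i, (d i)^-1 != 0 by move=> i; rewrite invr_eq0.
have H' : forall i, alpha i = beta i * \prod_(j < n | nb i j) (d j)^-1.
  move=> i; rewrite H prodfV -mulrA mulfV ?mulr1 //.
  by rewrite prodf_seq_neq0; apply/allP => j _; apply/implyP => _.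
exists (Tsc d), (Tsc (fun i => (d i)^-1)); split.
- by move=> i; rewrite (compT_gen _ nz _ _ H); apply: in_ideal_gen.
- by move=> i; rewrite (compT_gen _ nz' _ _ H'); apply: in_ideal_gen.
- by move=> k; rewrite (compTT _ nz) subrr; apply: in_ideal0.
- move=> k; have := compTT _ nz' k.
  have -> : Tsc (fun i => ((d i)^-1)^-1) = Tsc d.
    by apply: eq_from_tnth => k'; rewrite !tnth_mktuple /sc; case: split => j; rewrite invrK.
  by move=> ->; rewrite subrr; apply: in_ideal0.
Qed.
End Scale.

Section Build.
Variables (K : fieldType) (m : nat).

Definition aa (alpha : 'I_m.+1 -> K) (j : nat) : K := (alpha (inord j))^-1.
Definition bb (alpha : 'I_m.+1 -> K) (k : nat) : K := aa alpha (m - k).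
Definition EE (alpha : 'I_m.+1 -> K) (j : nat) : K :=
  if odd (m.+2 - j) then rec (aa alpha) j else rec (bb alpha) (m.+2 - j).

Variable alpha : 'I_m.+1 -> K.
Hypothesis nz : forall i, alpha i != 0.

Lemma aa_nz k : aa alpha k != 0.
Proof. by rewrite /aa invr_eq0. Qed.
Lemma bb_nz k : bb alpha k != 0.
Proof. exact: aa_nz. Qed.

Lemma EE_nz j : EE alpha j != 0.
Proof. by rewrite /EE; case: ifP => _; apply: rec_nz; [apply: aa_nz|apply: bb_nz]. Qed.

Lemma EE_last : EE alpha m.+2 = 1.
Proof. by rewrite /EE subnn. Qed.

Lemma EE_prod (i : nat) : (i < m.+1)%N -> EE alpha i * EE alpha i.+2 = aa alpha i.
Proof.
move=> hi; rewrite /EE.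
have e : (m.+2 - i = (m - i).+2)%N by lia.
have e2 : (m.+2 - i.+2 = m - i)%N by lia.
rewrite e e2 /= negbK; case: ifP => _ /=.
  have := rec_nz (aa alpha) aa_nz i => h; by field.
have := rec_nz (bb alpha) bb_nz (m - i) => h.
rewrite /bb subKn; last by lia.
by field.
Qed.

Lemma key (i : 'I_m.+1) :
  \prod_(j < m.+1 | nb _ i j) EE alpha j.+1 * (if val i == 0%N then EE alpha 0 else 1)
  = aa alpha i.
Proof.
rewrite /nb (prod_nb (fun j => EE alpha j.+1)).
have hi := ltn_ord i.
have -> : (if (i.+1 < m.+1)%N then EE alpha i.+2 else 1) = EE alpha i.+2.
  case: ifP => // h; have -> : i.+2 = m.+2 by lia. by rewrite EE_last.
case: i hi => [[|i'] hi] _ /=.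
  by rewrite mul1r mulrC EE_prod.
have -> : (i' < m.+1)%N by lia.
by rewrite mulr1 EE_prod.
Qed.

End Build.
Arguments aa {K m}.
Arguments bb {K m}.
Arguments EE {K m}.

Definition Afun (K : fieldType) (m : nat) (alpha : 'I_m.+1 -> K) : K :=
  (EE alpha 0)^-1.

Arguments Afun {K m}.
Arguments EE_nz {K m alpha}.
Arguments key {K m alpha}.
Lemma Afun_eq (K : fieldType) (m : nat) (alpha beta : 'I_m.+1 -> K) :
  (forall i : 'I_m.+1, ~~ odd i -> alpha i = beta i) -> Afun alpha = Afun beta.
Proof.
move=> H; rewrite /Afun /EE subn0; case: ifP => // ho.
congr (_^-1); apply: rec_eq => k hk.
rewrite /bb /aa; congr (_^-1); apply: H.
have hv : (m - k < m.+1)%N by lia.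
rewrite inordK //.
case: (leqP k m) => hkm; last by have -> : (m - k = 0)%N by lia.
by rewrite oddB // hk /= negbK addbb.
Qed.

Theorem mainTheorem5 (K : fieldType) (n : nat) (hn : (0 < n)%N) :
  (~~ odd n ->
     forall alpha : 'I_n -> K, (forall i, alpha i != 0) ->
       An_iso alpha (fun _ => 1))
  /\
  (odd n ->
     exists A : ('I_n -> K) -> K,
       (forall alpha beta : 'I_n -> K,
          (forall i : 'I_n, ~~ odd i -> alpha i = beta i) -> A alpha = A beta)
       /\
       (forall alpha : 'I_n -> K, (forall i, alpha i != 0) ->
          A alpha != 0 /\
          An_iso alpha (fun i : 'I_n => if val i == 0%N then A alpha else 1))).
Proof.
case: n hn => [//|m] _; split.
- move=> hev alpha nz.
  apply: (@scale_iso K m.+1 (fun j : 'I_m.+1 => EE alpha j.+1)).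
    by move=> j; apply: EE_nz.
  move=> i; have := key nz i.
  have E0 : EE alpha 0 = 1.
    by rewrite /EE subn0 /= negbK; move: hev => /= /negPn ->.
  rewrite E0 if_same mulr1 => ->.
  by rewrite /aa inord_val mulfV.
- move=> hodd; exists (@Afun K m); split; first exact: Afun_eq.
  move=> alpha nz; split; first by rewrite /Afun invr_eq0 EE_nz.
  apply: (@scale_iso K m.+1 (fun j : 'I_m.+1 => EE alpha j.+1)).
    by move=> j; apply: EE_nz.
  move=> i; have := key nz i.
  have ha : alpha i * aa alpha i = 1 by rewrite /aa inord_val mulfV.
  rewrite /Afun; case: ifP => _ hk.
    rewrite -[X in _ = _ * X](mulfK (EE_nz nz 0)) hk.
    by rewrite mulrA ha mul1r.
  by rewrite -[X in _ = _ * X]mulr1 hk ha.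
Qed.
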